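(* Let $G=\mathbb{Z}_2\times\mathbb{Z}_2\times\mathbb{Z}_2=\langle x_1\rangle\times\langle x_2\rangle\times\langle x_3\rangle$ and $\Phi(x_1^{i_1}x_2^{i_2}x_3^{i_3},x_1^{j_1}x_2^{j_2}x_3^{j_3},x_1^{k_1}x_2^{k_2}x_3^{k_3})=\prod_{l=1}^3(-1)^{i_l[\frac{j_l+k_l}{2}]}$ ($i_l,j_l,k_l\in\{0,1\}$). Let $\{\chi_1,\dots,\chi_N\}$, $N\ge3$, be an admissible series of quasi-characters of $G$ with respect to $\Phi$, where $\chi_i$ is associated to $\widetilde\Phi_{x_i}$ for elements $x_1,\dots,x_N\in G\setminus\{1\}$, the first three of which are the generators $x_1,x_2,x_3$. Then, after permuting the indices $4,\dots,N$, one of the following holds: (1) $3\le N\le6$ and $x_4,\dots,x_N$ are distinct elements of $\{x_1,x_2,x_3\}$; (2) $N\ge5$, $x_4=x_k$ for some $k\in\{1,2,3\}$, and writing $\{i,j\}=\{1,2,3\}\setminus\{k\}$, $\chi_i(x_i)=\chi_j(x_j)$ and $x_5=\cdots=x_N=x_ix_j$; (3) $N\ge4$ and there are $1\le i<j\le3$ with $x_4=\cdots=x_N=x_ix_j$ and $\chi_i(x_i)=\chi_j(x_j)$; (4) $N\ge4$, $x_4=x_1x_2x_3$, and there are $1\le i<j\le3$ with $x_5=\cdots=x_N=x_ix_j$ and $\chi_i(x_i)=\chi_j(x_j)$.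
   Context: $\mathbbm{k}$ algebraically closed of characteristic $0$; $[x]$ the integer part. $\widetilde\Phi_g(e,f)=\frac{\Phi(g,e,f)\Phi(e,f,g)}{\Phi(e,g,f)}$. A quasi-character associated to a 2-cocycle $\omega$ is $\chi:G\to\mathbbm{k}^*$ with $\chi(1)=1$ and $\chi(f)\chi(g)=\omega(f,g)\chi(fg)$. A series $\{\chi_1,\dots,\chi_N\}$ is admissible with respect to $\Phi$ if $\chi_i$ is associated to $\widetilde\Phi_{x_i}$ with $x_i\ne1$, $G=\langle x_1,\dots,x_N\rangle$, $\chi_i(x_j)\chi_j(x_i)=1$ for all $i\ne j$, and $\chi_i(x_i)\ne1$ for all $i$. (Given $\chi_1,\chi_2,\chi_3$, each $\chi_j$ with $j\ge4$ is determined by its degree $x_j$; the paper phrases conditions such as $x_j=x_k$, $x_j=x_ix_j'$ as equalities of quasi-characters $\chi_j=\chi'_k$, $\chi_j=\chi_{ij}$, $\chi_j=\chi_{123}$.) *)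

(* Defs.v *)
From mathcomp Require Import all_boot all_algebra.
Set Implicit Arguments. Unset Strict Implicit. Unset Printing Implicit Defensive.
Import GRing.Theory.
Local Open Scope ring_scope.

(* G = Z_2 x Z_2 x Z_2, an element x1^i1 x2^i2 x3^i3 is the triple (i1,i2,i3) of bits. *)
Definition G := (bool * bool * bool)%type.
Definition c1 (a : G) : bool := a.1.1.
Definition c2 (a : G) : bool := a.1.2.
Definition c3 (a : G) : bool := a.2.
Definition mulG (a b : G) : G :=
  (xorb (c1 a) (c1 b), xorb (c2 a) (c2 b), xorb (c3 a) (c3 b)).
Definition oneG : G := (false, false, false).
Definition gx1 : G := (true, false, false).
Definition gx2 : G := (false, true, false).
Definition gx3 : G := (false, false, true).

Definition Phi (k : fieldType) (a b c : G) : k :=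
  (-1) ^+ (c1 a * ((c1 b + c1 c) %/ 2))%N *
  (-1) ^+ (c2 a * ((c2 b + c2 c) %/ 2))%N *
  (-1) ^+ (c3 a * ((c3 b + c3 c) %/ 2))%N.

Definition tPhi (k : fieldType) (g : G) (e f : G) : k :=
  Phi k g e f * Phi k e f g / Phi k e g f.

Definition quasi_char (k : fieldType) (omega : G -> G -> k) (chi : G -> k) : Prop :=
  chi oneG = 1 /\ forall f g, chi f * chi g = omega f g * chi (mulG f g).

Definition prodG (x : nat -> G) (s : seq nat) : G := foldr (fun i a => mulG (x i) a) oneG s.

(* G = < x_0, ..., x_{N-1} > (G abelian of exponent 2: every element is a product of some x_i) *)
Definition generates (N : nat) (x : nat -> G) : Prop :=
  forall g : G, exists s : seq nat, all (fun i => i < N)%N s /\ g = prodG x s.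

(* {chi_0, ..., chi_{N-1}} (0-based) is admissible w.r.t. Phi with degrees x_i *)
Definition admissible (k : fieldType) (N : nat) (x : nat -> G) (chi : nat -> G -> k) : Prop :=
  [/\ forall i, (i < N)%N -> quasi_char (tPhi k (x i)) (chi i),
      forall i, (i < N)%N -> x i <> oneG,
      generates N x,
      forall i j, (i < N)%N -> (j < N)%N -> i <> j -> chi i (x j) * chi j (x i) = 1
    & forall i, (i < N)%N -> chi i (x i) <> 1].

(* Main.v *)
Require Import Defs.
From mathcomp Require Import all_boot all_algebra ring.
Import GRing.Theory.
Local Open Scope ring_scope.

Definition sg (k : fieldType) (b : bool) : k := if b then -1 else 1.

Lemma sgn_bits (k : fieldType) (a b c : bool) :
  (-1 : k) ^+ (a * ((b + c) %/ 2))%N = sg k [&& a, b & c].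
Proof. by case: a; case: b; case: c; rewrite /sg /= ?expr0 ?expr1. Qed.

Definition Pv (k : fieldType) (g e f : G) : k :=
  sg k [&& c1 g, c1 e & c1 f] * sg k [&& c2 g, c2 e & c2 f] * sg k [&& c3 g, c3 e & c3 f].

Lemma Phi_val (k : fieldType) g e f : Phi k g e f = Pv k g e f.
Proof. by rewrite /Phi !sgn_bits. Qed.

Lemma and3_rot (a b c : bool) : [&& a, b & c] = [&& c, a & b].
Proof. by case: a; case: b; case: c. Qed.
Lemma and3_sw (a b c : bool) : [&& a, b & c] = [&& b, a & c].
Proof. by case: a; case: b; case: c. Qed.

Lemma sg_sq (k : fieldType) b : sg k b * sg k b = 1.
Proof. by case: b; rewrite /sg ?mulrNN mulr1. Qed.

Lemma Pv_rot (k : fieldType) g e f : Pv k e f g = Pv k g e f.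
Proof. by rewrite /Pv (and3_rot (c1 e)) (and3_rot (c2 e)) (and3_rot (c3 e)). Qed.
Lemma Pv_sw (k : fieldType) g e f : Pv k e g f = Pv k g e f.
Proof. by rewrite /Pv (and3_sw (c1 e)) (and3_sw (c2 e)) (and3_sw (c3 e)). Qed.
Lemma Pv_sq (k : fieldType) g e f : Pv k g e f * Pv k g e f = 1.
Proof.
rewrite /Pv.
have -> : forall a b c : k, a*b*c*(a*b*c) = (a*a)*(b*b)*(c*c) by move=> a b c; ring.
by rewrite !sg_sq !mulr1.
Qed.

Lemma tPhi_val (k : fieldType) g e f : tPhi k g e f = Pv k g e f.
Proof.
rewrite /tPhi !Phi_val (Pv_rot k g e f) (Pv_sw k g e f).
have PP := Pv_sq k g e f.
have P0 : Pv k g e f != 0.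
  by apply/eqP => P0; move: PP; rewrite P0 mul0r => /eqP; rewrite eq_sym oner_eq0.
by rewrite mulfK.
Qed.

Lemma qc_disj (k : fieldType) g (chi : G -> k) e f :
  quasi_char (tPhi k g) chi ->
  (c1 e && c1 f) = false -> (c2 e && c2 f) = false -> (c3 e && c3 f) = false ->
  chi e * chi f = chi (mulG e f).
Proof.
move=> [_ hm] h1 h2 h3; rewrite hm tPhi_val /Pv h1 h2 h3 !andbF /sg.
by rewrite !mul1r.
Qed.

Lemma decomp (k : fieldType) g (chi : G -> k) : quasi_char (tPhi k g) chi ->
  forall e, chi e = (if c1 e then chi gx1 else 1) * (if c2 e then chi gx2 else 1) *
                    (if c3 e then chi gx3 else 1).
Proof.
move=> q; have [h1 _] := q.
have d12 := @qc_disj _ _ _ (gx1) gx2 q erefl erefl erefl.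
have d13 := @qc_disj _ _ _ (gx1) gx3 q erefl erefl erefl.
have d23 := @qc_disj _ _ _ (gx2) gx3 q erefl erefl erefl.
have d123 := @qc_disj _ _ _ (mulG gx1 gx2) gx3 q erefl erefl erefl.
rewrite /= in d12 d13 d23 d123.
case=> [[[] []] []] /=; rewrite ?mul1r ?mulr1 //.
all: try by rewrite -d123 -d12.
all: try by rewrite -d12.
all: try by rewrite -d13.
all: try by rewrite -d23.
Qed.

Definition Dn (k : fieldType) (v : nat -> k) (e : G) : k :=
  (if c1 e then v 0%N else 1) * (if c2 e then v 1%N else 1) * (if c3 e then v 2%N else 1).
Arguments Dn {k}.

Definition par (a b : G) : bool :=
  xorb (c1 a && c1 b) (xorb (c2 a && c2 b) (c3 a && c3 b)).

Lemma Dn_mul (k : fieldType) (v w : nat -> k) e :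
  Dn v e * Dn w e = Dn (fun m => v m * w m) e.
Proof. by rewrite /Dn; case: (c1 e); case: (c2 e); case: (c3 e); ring. Qed.

Lemma eq_Dn (k : fieldType) (v w : nat -> k) e :
  (forall m, (m < 3)%N -> v m = w m) -> Dn v e = Dn w e.
Proof. by move=> h; rewrite /Dn !h. Qed.

Lemma Dn1 (k : fieldType) e : Dn (fun _ => 1 : k) e = 1.
Proof. by rewrite /Dn; case: (c1 e); case: (c2 e); case: (c3 e); rewrite !mulr1. Qed.

Lemma Dn_ex (k : fieldType) (f : nat -> nat -> k) g g' :
  Dn (fun l => Dn (fun m => f l m) g') g = Dn (fun m => Dn (fun l => f l m) g) g'.
Proof.
rewrite /Dn; case: (c1 g); case: (c2 g); case: (c3 g);
  case: (c1 g'); case: (c2 g'); case: (c3 g'); ring.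
Qed.

Lemma Dn_sign (k : fieldType) g g' :
  Dn (fun m => Dn (fun l => if m == l then -1 else 1 : k) g) g' = sg k (par g g').
Proof.
rewrite /Dn /par; case: (c1 g); case: (c2 g); case: (c3 g);
  case: (c1 g'); case: (c2 g'); case: (c3 g'); rewrite /sg /= ?mulr1 ?mul1r ?mulrNN ?mulr1 ?mul1r //.
Qed.

Lemma mulGG a : mulG a a = oneG.
Proof. by case: a => [[[] []] []]. Qed.

Lemma decompn (k : fieldType) (x : nat -> G) g (chi : G -> k) :
  x 0%N = gx1 -> x 1%N = gx2 -> x 2%N = gx3 -> quasi_char (tPhi k g) chi ->
  forall e, chi e = Dn (fun m => chi (x m)) e.
Proof. by move=> h0 h1 h2 q e; rewrite /Dn h0 h1 h2; apply: decomp q e. Qed.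

Lemma alg_pair (k : fieldType) (p q cab cba va vb : k) :
  p * p = -1 -> q * q = -1 -> p * cab * va = 1 -> cba * q * vb = 1 ->
  cab * cba = 1 -> va * vb != 1 -> p = q.
Proof.
move=> hp hq ha hb hc ht.
have st : p * q * (va * vb) = 1.
  have : p * q * (va * vb) * (cab * cba) = (p * cab * va) * (cba * q * vb) by ring.
  by rewrite ha hb hc !mulr1.
have s2 : (p * q) ^+ 2 = 1.
  have -> : (p * q) ^+ 2 = (p * p) * (q * q) by ring.
  by rewrite hp hq mulrNN mulr1.
move/eqP: s2; rewrite sqrf_eq1 => /orP[/eqP s1|/eqP s1].
  by move: st; rewrite s1 mul1r => st; rewrite st eqxx in ht.
have p0 : p != 0.
  by apply/eqP => p0; move: hp; rewrite p0 mul0r => /eqP; rewrite eq_sym oppr_eq0 oner_eq0.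
by apply/esym/(mulfI p0); rewrite s1 hp.
Qed.

Section Adm.
Variables (k : fieldType) (N : nat) (x : nat -> G) (chi : nat -> G -> k).
Hypotheses (hx0 : x 0%N = gx1) (hx1 : x 1%N = gx2) (hx2 : x 2%N = gx3) (h3 : (3 <= N)%N).
Hypothesis adm : admissible N x chi.

Lemma Dc m e : (m < N)%N -> chi m e = Dn (fun l => chi m (x l)) e.
Proof. by case: adm => q _ _ _ _ hm; apply: decompn hx0 hx1 hx2 (q m hm) e. Qed.

Lemma sqp m : (m < 3)%N -> chi m (x m) * chi m (x m) = -1.
Proof.
move=> hm; have hmN : (m < N)%N by apply: leq_trans hm h3.
case: adm => q _ _ _ _; have [_ hq] := q m hmN; have [h1 _] := q m hmN.
rewrite hq mulGG h1 mulr1 tPhi_val /Pv.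
by case: m hm {hmN hq h1} => [|[|[|]]] // _; rewrite ?hx0 ?hx1 ?hx2 /sg /= ?mulr1 ?mul1r.
Qed.

Lemma cc m l : (m < 3)%N -> (l < 3)%N ->
  chi m (x l) * chi l (x m) = if m == l then -1 else 1.
Proof.
move=> hm hl; case: eqP => [<-|ne]; first exact: sqp.
case: adm => _ _ _ h _; apply: h => //; [exact: leq_trans hm h3|exact: leq_trans hl h3].
Qed.

Lemma compat j m : (3 <= j < N)%N -> (m < 3)%N -> chi j (x m) * chi m (x j) = 1.
Proof.
move=> /andP[j3 jN] hm; case: adm => _ _ _ h _; rewrite mulrC; apply: h => //.
  exact: leq_trans hm h3.
by move=> e; subst; move: hm; rewrite ltnNge j3.
Qed.

Lemma par_sg j j' : (3 <= j < N)%N -> (3 <= j' < N)%N -> j <> j' ->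
  sg k (par (x j) (x j')) = 1.
Proof.
move=> hj hj' ne.
have jN : (j < N)%N by case/andP: hj.
have j'N : (j' < N)%N by case/andP: hj'.
have H : chi j (x j') * chi j' (x j) = 1 by case: adm => _ _ _ h _; exact: h.
set E := Dn (fun m => chi m (x j)) (x j') * Dn (fun l => chi l (x j')) (x j).
have E1 : (chi j (x j') * chi j' (x j)) * E = 1.
  rewrite /E (Dc j (x j') jN) (Dc j' (x j) j'N) mulrACA !Dn_mul.
  rewrite (@eq_Dn _ _ (fun _ => 1) (x j')); last by move=> m hm; exact: compat.
  rewrite (@eq_Dn _ _ (fun _ => 1) (x j)); last by move=> m hm; exact: compat.
  by rewrite !Dn1 mulr1.
rewrite H mul1r in E1.
have E2 : E = Dn (fun m => Dn (fun l => if m == l then -1 else 1) (x j)) (x j').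
  rewrite /E.
  rewrite (@eq_Dn _ _ (fun m => Dn (fun l => chi m (x l)) (x j)) (x j')); last first.
    by move=> m hm; exact: (Dc _ _ (leq_trans hm h3)).
  rewrite (@eq_Dn _ _ (fun l => Dn (fun m => chi l (x m)) (x j')) (x j)); last first.
    by move=> m hm; exact: (Dc _ _ (leq_trans hm h3)).
  rewrite [X in _ * X]Dn_ex Dn_mul; apply: eq_Dn => m hm; rewrite Dn_mul; apply: eq_Dn => l hl.
  exact: cc.
by rewrite -Dn_sign -E2 E1.
Qed.

Lemma pair_eq j a b : (3 <= j < N)%N ->
  [|| (a == 0%N) && (b == 1%N), (a == 0%N) && (b == 2%N) | (a == 1%N) && (b == 2%N)] ->
  x j = mulG (x a) (x b) -> chi a (x a) = chi b (x b).
Proof.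
move=> hj hab e.
have jN : (j < N)%N by case/andP: hj.
have ha : (a < 3)%N by case/or3P: hab => /andP[/eqP -> _].
have hb : (b < 3)%N by case/or3P: hab => /andP[_ /eqP ->].
have ne : chi j (x j) != 1 by case: adm => _ _ _ _ h; apply/eqP; exact: h.
have Ca := compat j a hj ha; have Cb := compat j b hj hb.
rewrite (Dc a (x j) (leq_trans ha h3)) in Ca.
rewrite (Dc b (x j) (leq_trans hb h3)) in Cb.
rewrite (Dc j (x j) jN) in ne.
have Cab := cc a b ha hb.
have pa := sqp a ha; have pb := sqp b hb.
case/or3P: hab => /andP[/eqP ea /eqP eb]; subst a b.
- have ej : x j = (true, true, false) by rewrite e hx0 hx1.
  rewrite /Dn ej /= in Ca Cb ne; rewrite /= in Cab.
  apply: (@alg_pair _ _ _ (chi 0%N (x 1%N)) (chi 1%N (x 0%N)) (chi j (x 0%N)) (chi j (x 1%N)) pa pb) => //.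
  + by rewrite -[RHS]Ca; ring.
  + by rewrite -[RHS]Cb; ring.
  + by rewrite mulr1 in ne.
- have ej : x j = (true, false, true) by rewrite e hx0 hx2.
  rewrite /Dn ej /= in Ca Cb ne; rewrite /= in Cab.
  apply: (@alg_pair _ _ _ (chi 0%N (x 2%N)) (chi 2%N (x 0%N)) (chi j (x 0%N)) (chi j (x 2%N)) pa pb) => //.
  + by rewrite -[RHS]Ca; ring.
  + by rewrite -[RHS]Cb; ring.
  + by rewrite mulr1 in ne.
- have ej : x j = (false, true, true) by rewrite e hx1 hx2.
  rewrite /Dn ej /= in Ca Cb ne; rewrite /= in Cab.
  apply: (@alg_pair _ _ _ (chi 1%N (x 2%N)) (chi 2%N (x 1%N)) (chi j (x 1%N)) (chi j (x 2%N)) pa pb) => //.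
  + by rewrite -[RHS]Ca; ring.
  + by rewrite -[RHS]Cb; ring.
  + by rewrite mul1r in ne.
Qed.

End Adm.

From Stdlib Require Import Classical.
From mathcomp Require Import zify.

Definition T3 : G := (true, true, true).

Definition Concl (k : fieldType) (N : nat) (x : nat -> G) (chi : nat -> G -> k) : Prop :=
  exists s : nat -> nat,
    [/\ forall m, (m < 3)%N -> s m = m,
        forall m, (3 <= m < N)%N -> (3 <= s m < N)%N,
        forall m n, (m < N)%N -> (n < N)%N -> s m = s n -> m = n
      & let y := fun m => x (s m) in
        [\/ [/\ (N <= 6)%N,
                forall m, (3 <= m < N)%N -> y m = x 0%N \/ y m = x 1%N \/ y m = x 2%N
              & forall m n, (3 <= m < N)%N -> (3 <= n < N)%N -> y m = y n -> m = n],
            (5 <= N)%N /\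
            exists i j l : nat,
              [/\ [/\ (i < j < 3)%N, (l < 3)%N, l <> i & l <> j],
                  y 3%N = x l,
                  chi i (x i) = chi j (x j)
                & forall m, (4 <= m < N)%N -> y m = mulG (x i) (x j)],
            (4 <= N)%N /\
            exists i j : nat,
              [/\ (i < j < 3)%N,
                  forall m, (3 <= m < N)%N -> y m = mulG (x i) (x j)
                & chi i (x i) = chi j (x j)]
          | [/\ (4 <= N)%N,
                y 3%N = mulG (x 0%N) (mulG (x 1%N) (x 2%N))
              & exists i j : nat,
                [/\ (i < j < 3)%N,
                    forall m, (4 <= m < N)%N -> y m = mulG (x i) (x j)
                  & chi i (x i) = chi j (x j)]]]].

Lemma caseA (k : fieldType) (N : nat) (x : nat -> G) (chi : nat -> G -> k) (a b l j0 : nat) :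
  (a < b < 3)%N -> (l < 3)%N -> l <> a -> l <> b ->
  chi a (x a) = chi b (x b) ->
  (3 <= j0 < N)%N -> x j0 = mulG (x a) (x b) ->
  (forall j, (3 <= j < N)%N -> [\/ x j = mulG (x a) (x b), x j = x l | x j = T3]) ->
  (forall j j', (3 <= j < N)%N -> (3 <= j' < N)%N -> j <> j' ->
      x j <> mulG (x a) (x b) -> x j' <> mulG (x a) (x b) -> False) ->
  T3 = mulG (x 0%N) (mulG (x 1%N) (x 2%N)) ->
  Concl k N x chi.
Proof.
rewrite /Concl.
move=> hab hl hla hlb hch hj0 xj0 hcl hbad hT.
case: (classic (exists t, (3 <= t < N)%N /\ x t <> mulG (x a) (x b))); last first.
  move=> hno; exists (fun m => m); split => //.
  apply: Or43; split; first by lia.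
  exists a, b; split => //.
  move=> m hm /=.
  by apply: NNPP => hm'; apply: hno; exists m.
move=> [t [ht hxt]].
have tj0 : t <> j0 by move=> e; subst; rewrite xj0 in hxt.
pose s := fun m => if m == 3%N then t else if m == t then 3%N else m.
have s_inj : forall m n, (m < N)%N -> (n < N)%N -> s m = s n -> m = n.
  move=> m n hm hn; rewrite /s; repeat case: ifP => /eqP ?; lia.
have s_rng : forall m, (3 <= m < N)%N -> (3 <= s m < N)%N.
  move=> m hm; rewrite /s; repeat case: ifP => /eqP ?; lia.
have s_low : forall m, (m < 3)%N -> s m = m.
  move=> m hm; rewrite /s; repeat case: ifP => /eqP ?; lia.
have s3 : s 3%N = t by rewrite /s eqxx.
have srest : forall m, (4 <= m < N)%N -> x (s m) = mulG (x a) (x b).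
  move=> m hm; apply: NNPP => hne.
  have hsm := s_rng m ltac:(lia).
  have : s m <> t by rewrite /s; repeat case: ifP => /eqP ?; lia.
  by move=> hst; apply: (hbad t (s m)) => // e; apply: hst.
exists s; split => //.
case: (hcl t ht) => [//|hxl|hxT].
- apply: Or42; split; first by lia.
  exists a, b, l; split; [by [] | by rewrite /= s3 | by [] | exact: srest].
- apply: Or44; split; first by lia.
  + by rewrite /= s3 hxT.
  + by exists a, b; split.
Qed.

Lemma neg1_ne1 (k : fieldType) : [pchar k] =i pred0 -> (-1 : k) != 1.
Proof.
move=> hc; apply/eqP => e.
have := hc 2%N; rewrite !inE /=.
have -> : (2 : k) = 1 + 1 by [].
by rewrite -{1}e addNr eqxx.
Qed.

Lemma p3 (k : fieldType) (p q r : k) : p * p = -1 -> q * q = -1 -> r * r = -1 ->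
  [\/ p = q, p = r | q = r].
Proof.
move=> hp hq hr.
have sq : forall u v : k, u * u = -1 -> v * v = -1 -> u = v \/ v = - u.
  move=> u v hu hv.
  have : (u - v) * (u + v) = 0.
    have -> : (u - v) * (u + v) = u * u - v * v by ring.
    by rewrite hu hv subrr.
  move/eqP; rewrite mulf_eq0 => /orP[/eqP h|/eqP h].
    by left; apply/eqP; rewrite -subr_eq0 h.
  by right; apply/eqP; rewrite -addr_eq0 addrC h.
case: (sq p q hp hq) => [->|eq]; first by apply: Or31.
case: (sq p r hp hr) => [->|er]; first by apply: Or32.
by apply: Or33; rewrite eq er.
Qed.

Definition P01 : G := (true, true, false).
Definition P02 : G := (true, false, true).
Definition P12 : G := (false, true, true).

Lemma finP (P g : G) :
  [\/ (P = P01 /\ g = gx3), (P = P02 /\ g = gx2) | (P = P12 /\ g = gx1)] ->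
  forall e, e <> oneG -> par e P = false -> [\/ e = P, e = g | e = T3].
Proof.
case=> [[-> ->]|[-> ->]|[-> ->]];
case=> [[[] []] []] h1 h2; rewrite /par /= in h2; try discriminate;
  try (by apply: Or31); try (by apply: Or32); try (by apply: Or33);
  by exfalso; apply: h1.
Qed.

Lemma bad (g e f : G) : (g = gx1 \/ g = gx2 \/ g = gx3) -> (e = g \/ e = T3) ->
  (f = g \/ f = T3) -> par e f = true.
Proof. by move=> [->|[->|->]] [->|->] [->|->]. Qed.

Lemma finB e : e <> oneG -> ~ [\/ e = P01, e = P02 | e = P12] ->
  e = gx1 \/ e = gx2 \/ e = gx3 \/ e = T3.
Proof.
case: e => [[[] []] []] h1 h2.
all: try by [left | right; left | right; right; left | right; right; right].
all: exfalso; first [by apply: h1 | apply: h2; first [by apply: Or31 | by apply: Or32 | by apply: Or33]].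
Qed.

Lemma parT e : e = gx1 \/ e = gx2 \/ e = gx3 \/ e = T3 -> par e T3 = true.
Proof. by move=> [->|[->|[->|->]]]. Qed.

Lemma par_self e : e = gx1 \/ e = gx2 \/ e = gx3 -> par e e = true.
Proof. by move=> [->|[->|->]]. Qed.

Lemma caseA2 (k : fieldType) (N : nat) (x : nat -> G) (chi : nat -> G -> k) (a b l j0 : nat) :
  (a < b < 3)%N -> (l < 3)%N -> l <> a -> l <> b ->
  (x l = gx1 \/ x l = gx2 \/ x l = gx3) ->
  chi a (x a) = chi b (x b) ->
  (3 <= j0 < N)%N -> x j0 = mulG (x a) (x b) ->
  (forall j j', (3 <= j < N)%N -> (3 <= j' < N)%N -> j <> j' -> par (x j) (x j') = false) ->
  (forall j, (3 <= j < N)%N -> x j <> oneG) ->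
  (forall e, e <> oneG -> par e (mulG (x a) (x b)) = false ->
     [\/ e = mulG (x a) (x b), e = x l | e = T3]) ->
  T3 = mulG (x 0%N) (mulG (x 1%N) (x 2%N)) ->
  Concl k N x chi.
Proof.
move=> hab hl hla hlb hg hch hj0 xj0 Hpar Hne hfin hT.
have hcl : forall j, (3 <= j < N)%N -> [\/ x j = mulG (x a) (x b), x j = x l | x j = T3].
  move=> j hj; case: (eqVneq j j0) => [->|ne]; first by apply: Or31.
  apply: hfin; first exact: Hne.
  by rewrite -xj0; apply: Hpar => //; apply/eqP.
apply: (@caseA k N x chi a b l j0 hab hl hla hlb hch hj0 xj0 hcl) => // j j' hj hj' ne nj nj'.
have : par (x j) (x j') = true.
  apply: (@bad (x l) _ _ hg).
  - by case: (hcl j hj) => // ->; [left | right].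
  - by case: (hcl j' hj') => // ->; [left | right].
by rewrite Hpar.
Qed.

Theorem proposition5p6 (k : closedFieldType) (hchar : [pchar k] =i pred0)
  (N : nat) (x : nat -> G) (chi : nat -> G -> k) :
  (3 <= N)%N ->
  x 0%N = gx1 -> x 1%N = gx2 -> x 2%N = gx3 ->
  admissible N x chi ->
  exists s : nat -> nat,
    [/\ forall m, (m < 3)%N -> s m = m,
        forall m, (3 <= m < N)%N -> (3 <= s m < N)%N,
        forall m n, (m < N)%N -> (n < N)%N -> s m = s n -> m = n
      & let y := fun m => x (s m) in
        [\/ (* (1) *)
            [/\ (N <= 6)%N,
                forall m, (3 <= m < N)%N -> y m = x 0%N \/ y m = x 1%N \/ y m = x 2%N
              & forall m n, (3 <= m < N)%N -> (3 <= n < N)%N -> y m = y n -> m = n],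
            (* (2) *)
            (5 <= N)%N /\
            exists i j l : nat,
              [/\ [/\ (i < j < 3)%N, (l < 3)%N, l <> i & l <> j],
                  y 3%N = x l,
                  chi i (x i) = chi j (x j)
                & forall m, (4 <= m < N)%N -> y m = mulG (x i) (x j)],
            (* (3) *)
            (4 <= N)%N /\
            exists i j : nat,
              [/\ (i < j < 3)%N,
                  forall m, (3 <= m < N)%N -> y m = mulG (x i) (x j)
                & chi i (x i) = chi j (x j)]
          | (* (4) *)
            [/\ (4 <= N)%N,
                y 3%N = mulG (x 0%N) (mulG (x 1%N) (x 2%N))
              & exists i j : nat,
                [/\ (i < j < 3)%N,
                    forall m, (4 <= m < N)%N -> y m = mulG (x i) (x j)
                  & chi i (x i) = chi j (x j)]]]].
Proof.
move=> h3 hx0 hx1 hx2 adm.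
change (Concl k N x chi).
have neg := @neg1_ne1 k hchar.
have Hne : forall j, (3 <= j < N)%N -> x j <> oneG.
  by move=> j /andP[_ hj]; case: adm => _ h _ _ _; exact: h.
have Hpar : forall j j', (3 <= j < N)%N -> (3 <= j' < N)%N -> j <> j' ->
    par (x j) (x j') = false.
  move=> j j' hj hj' ne; have := @par_sg k N x chi hx0 hx1 hx2 h3 adm j j' hj hj' ne.
  by case: (par _ _) => //= e; rewrite /sg in e; rewrite e eqxx in neg.
have hT : T3 = mulG (x 0%N) (mulG (x 1%N) (x 2%N)) by rewrite hx0 hx1 hx2.
have pe := @pair_eq k N x chi hx0 hx1 hx2 h3 adm.
have sq := @sqp k N x chi hx0 hx1 hx2 h3 adm.
case: (classic (exists j0, (3 <= j0 < N)%N /\ [\/ x j0 = P01, x j0 = P02 | x j0 = P12]))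
  => [[j0 [hj0 [e|e|e]]]|nopair].
- have xe : x j0 = mulG (x 0%N) (x 1%N) by rewrite e hx0 hx1.
  apply: (@caseA2 k N x chi 0 1 2 j0) => //.
  + by rewrite hx2; right; right.
  + exact: (pe j0 0%N 1%N hj0 erefl xe).
  + by rewrite hx0 hx1 hx2; apply: finP; apply: Or31.
- have xe : x j0 = mulG (x 0%N) (x 2%N) by rewrite e hx0 hx2.
  apply: (@caseA2 k N x chi 0 2 1 j0) => //.
  + by rewrite hx1; right; left.
  + exact: (pe j0 0%N 2%N hj0 erefl xe).
  + by rewrite hx0 hx1 hx2; apply: finP; apply: Or32.
- have xe : x j0 = mulG (x 1%N) (x 2%N) by rewrite e hx1 hx2.
  apply: (@caseA2 k N x chi 1 2 0 j0) => //.
  + by rewrite hx0; left.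
  + exact: (pe j0 1%N 2%N hj0 erefl xe).
  + by rewrite hx0 hx1 hx2; apply: finP; apply: Or33.
have hcls : forall j, (3 <= j < N)%N -> x j = gx1 \/ x j = gx2 \/ x j = gx3 \/ x j = T3.
  move=> j hj; apply: finB; first exact: Hne.
  by move=> h; apply: nopair; exists j.
rewrite /Concl.
case: (classic (exists j, (3 <= j < N)%N /\ x j = T3)) => [[j [hj ej]]|noT].
  have N4 : N = 4%N.
    apply: NNPP => hN.
    pose j' := if j == 3%N then 4%N else 3%N.
    have hj' : (3 <= j' < N)%N by rewrite /j'; case: ifP => /eqP; lia.
    have ne : j' <> j by rewrite /j'; case: ifP => /eqP; lia.
    have := Hpar j' j hj' hj ne.
    by rewrite ej parT //; apply: hcls.
  have j3 : j = 3%N by lia.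
  subst j N.
  exists (fun m => m); split => //.
  apply: Or44; split; [by [] | by rewrite /= ej | ].
  case: (@p3 k _ _ _ (sq 0%N erefl) (sq 1%N erefl) (sq 2%N erefl)) => e;
    [exists 0%N, 1%N | exists 0%N, 2%N | exists 1%N, 2%N]; split => // m; lia.
have hs : forall j, (3 <= j < N)%N -> x j = gx1 \/ x j = gx2 \/ x j = gx3.
  move=> j hj; case: (hcls j hj) => [->|[->|[->|eT]]]; try tauto.
  by exfalso; apply: noT; exists j.
exists (fun m => m); split => //.
apply: Or41; split.
- apply/negP => /negP hN; rewrite -ltnNge in hN.
  have p34 := Hpar 3%N 4%N ltac:(lia) ltac:(lia) ltac:(lia).
  have p35 := Hpar 3%N 5%N ltac:(lia) ltac:(lia) ltac:(lia).
  have p36 := Hpar 3%N 6%N ltac:(lia) ltac:(lia) ltac:(lia).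
  have p45 := Hpar 4%N 5%N ltac:(lia) ltac:(lia) ltac:(lia).
  have p46 := Hpar 4%N 6%N ltac:(lia) ltac:(lia) ltac:(lia).
  have p56 := Hpar 5%N 6%N ltac:(lia) ltac:(lia) ltac:(lia).
  case: (hs 3%N ltac:(lia)) => [e3|[e3|e3]]; case: (hs 4%N ltac:(lia)) => [e4|[e4|e4]];
  case: (hs 5%N ltac:(lia)) => [e5|[e5|e5]]; case: (hs 6%N ltac:(lia)) => [e6|[e6|e6]];
  rewrite e3 e4 e5 e6 /= in p34 p35 p36 p45 p46 p56; done.
- by move=> m hm /=; rewrite hx0 hx1 hx2; apply: hs.
- move=> m n hm hn /= e; apply: NNPP => ne; have := Hpar m n hm hn ne.
  by rewrite e par_self //; apply: hs.
Qed.
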